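(* In the double-option game, let $(b,r)$ with $b,r\ge0$ be any proposal and let bidder 2 hold any belief (probability distribution) about $v_1$ on $[\underline v_1,\bar v_1]$ after observing $(b,r)$. Then bidder 2's best response can be described by a pair of critical values $(v_2^b,v_2^r)$ satisfying $$v_2^b\le \min\{b+r,\bar v_2\}\le v_2^r\le \bar v_2,$$ such that type $v_2$ accepts the bribe $b$ if $v_2\le v_2^b$, rejects the proposal if $v_2^b<v_2<v_2^r$, and accepts the request $r$ if $v_2\ge v_2^r$.
   Context: Two risk-neutral bidders $i=1,2$ compete for one indivisible object. Bidder $i$'s valuation $v_i$ is private, drawn independently from a cdf $F_i$ on $[\underline v_i,\bar v_i]$ with $0\le \underline v_i<\bar v_i<\infty$, with continuous density $0<f_i<\infty$ on that interval. Double-option game: bidder 1 learns $v_1$ and proposes $(b,r)$, $b,r\ge 0$. Bidder 2 learns $v_2$, observes $(b,r)$ and either accepts the bribe (payoffs $(v_1-b,\ b)$ to bidders 1 and 2), accepts the request (payoffs $(r,\ v_2-r)$), or rejects, in which case both bid truthfully in a second-price auction without reserve price (payoffs $((v_1-v_2)^+,\ (v_2-v_1)^+)$). A best response of bidder 2 to a belief is a choice for each type $v_2$ maximizing her expected payoff given the belief about $v_1$. *)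

(* Defs.v *)
From Stdlib Require Import Reals Lra.
Open Scope R_scope.

(* A belief of bidder 2 about v1 : a probability distribution on [lo1,hi1].
   Without measure theory we represent it (Riesz representation on a compact
   interval) by its expectation operator: a positive, normalized, linear
   functional on functions that are continuous on [lo1,hi1]. *)
Definition cont_on (lo hi : R) (f : R -> R) : Prop :=
  forall x, lo <= x <= hi -> continuity_pt f x.

Record belief (lo1 hi1 : R) : Type := {
  Ex : (R -> R) -> R;
  Ex_add : forall f g, cont_on lo1 hi1 f -> cont_on lo1 hi1 g ->
      Ex (fun x => f x + g x) = Ex f + Ex g;
  Ex_scal : forall c f, cont_on lo1 hi1 f -> Ex (fun x => c * f x) = c * Ex f;
  Ex_pos : forall f, cont_on lo1 hi1 f ->
      (forall x, lo1 <= x <= hi1 -> 0 <= f x) -> 0 <= Ex f;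
  Ex_one : Ex (fun _ => 1) = 1
}.

Inductive action := AcceptBribe | Reject | AcceptRequest.

Definition payoff2 {lo1 hi1} (mu : belief lo1 hi1) (b r v2 : R) (a : action) : R :=
  match a with
  | AcceptBribe => b
  | AcceptRequest => v2 - r
  | Reject => Ex lo1 hi1 mu (fun v1 => Rmax (v2 - v1) 0)
  end.

Definition optimal {lo1 hi1} (mu : belief lo1 hi1) (b r v2 : R) (a : action) : Prop :=
  forall a', payoff2 mu b r v2 a' <= payoff2 mu b r v2 a.

Definition cutoff_strategy (vb vr v2 : R) : action :=
  if Rle_dec v2 vb then AcceptBribe
  else if Rlt_dec v2 vr then Reject else AcceptRequest.

(* Main.v *)
Require Import Defs.
From Stdlib Require Import Reals Lra FunctionalExtensionality.
Open Scope R_scope.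

Section Aux.
Variables lo1 hi1 : R.
Variable mu : belief lo1 hi1.
Notation E := (Ex lo1 hi1 mu).

Lemma cont_const c : cont_on lo1 hi1 (fun _ => c).
Proof. intros x _. apply continuity_pt_const. intros a b'; reflexivity. Qed.

Lemma cont_add f g : cont_on lo1 hi1 f -> cont_on lo1 hi1 g ->
  cont_on lo1 hi1 (fun x => f x + g x).
Proof. intros Hf Hg x Hx. apply (continuity_pt_plus f g); auto. Qed.

Lemma cont_scal c f : cont_on lo1 hi1 f -> cont_on lo1 hi1 (fun x => c * f x).
Proof. intros Hf x Hx. apply (continuity_pt_scal f c); auto. Qed.

Lemma cont_g v : cont_on lo1 hi1 (fun x => Rmax (v - x) 0).
Proof.
  intros x0 _. unfold continuity_pt, continue_in, limit1_in, limit_in.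
  intros eps Heps. exists eps. split; [lra|].
  intros x [_ Hx]. simpl in *. unfold R_dist in *.
  unfold Rmax; repeat destruct Rle_dec; unfold Rabs in *;
  repeat destruct Rcase_abs; lra.
Qed.

Lemma Ex_const c : E (fun _ => c) = c.
Proof.
  pose proof (Ex_scal _ _ mu c (fun _ => 1) (cont_const 1)) as H.
  rewrite (Ex_one _ _ mu) in H.
  replace (fun _ : R => c) with (fun _ : R => c * 1).
  - rewrite H; ring.
  - apply functional_extensionality; intros; ring.
Qed.

Lemma Ex_mono f g : cont_on lo1 hi1 f -> cont_on lo1 hi1 g ->
  (forall x, lo1 <= x <= hi1 -> f x <= g x) -> E f <= E g.
Proof.
  intros Hf Hg Hle.
  assert (Hc : cont_on lo1 hi1 (fun x => -1 * f x)) by (apply cont_scal; auto).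
  pose proof (Ex_add _ _ mu g (fun x => -1 * f x) Hg Hc) as H1.
  pose proof (Ex_scal _ _ mu (-1) f Hf) as H2.
  pose proof (Ex_pos _ _ mu (fun x => g x + -1 * f x) (cont_add _ _ Hg Hc)) as H3.
  cbv beta in H1. rewrite H1, H2 in H3.
  assert (0 <= E g + -1 * E f); [|lra].
  apply H3. intros x Hx. specialize (Hle x Hx). lra.
Qed.

Lemma Ex_addc c f : cont_on lo1 hi1 f -> E (fun x => c + f x) = c + E f.
Proof.
  intros Hf. pose proof (Ex_add _ _ mu (fun _ => c) f (cont_const c) Hf) as H.
  cbv beta in H. rewrite H, Ex_const. reflexivity.
Qed.

Definition Rf v := E (fun x => Rmax (v - x) 0).

Lemma R_nonneg v : 0 <= Rf v.
Proof.
  unfold Rf. rewrite <- (Ex_const 0) at 1. apply Ex_mono.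
  apply cont_const. apply cont_g. intros; apply Rmax_r.
Qed.

Lemma R_lo1 : Rf lo1 <= 0.
Proof.
  unfold Rf. pattern 0 at 2. rewrite <- (Ex_const 0). apply Ex_mono.
  apply cont_g. apply cont_const. intros x Hx. unfold Rmax; destruct Rle_dec; lra.
Qed.

Lemma R_mono v w : v <= w -> Rf v <= Rf w.
Proof.
  intros H. unfold Rf. apply Ex_mono; try apply cont_g.
  intros x _. unfold Rmax; repeat destruct Rle_dec; lra.
Qed.

Lemma R_lip v w : v <= w -> Rf w - Rf v <= w - v.
Proof.
  intros H. unfold Rf.
  assert (E (fun x => Rmax (w - x) 0) <= E (fun x => (w - v) + Rmax (v - x) 0)).
  { apply Ex_mono; try apply cont_g.
    - apply cont_add; [apply cont_const|apply cont_g].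
    - intros x _. unfold Rmax; repeat destruct Rle_dec; lra. }
  rewrite Ex_addc in H0 by apply cont_g. lra.
Qed.

End Aux.

Theorem lemma1 (lo1 hi1 lo2 hi2 : R)
  (h1 : 0 <= lo1) (h1' : lo1 < hi1) (h2 : 0 <= lo2) (h2' : lo2 < hi2)
  (b r : R) (hb : 0 <= b) (hr : 0 <= r) (mu : belief lo1 hi1) :
  exists vb vr : R,
    vb <= Rmin (b + r) hi2 /\ Rmin (b + r) hi2 <= vr /\ vr <= hi2 /\
    forall v2, lo2 <= v2 <= hi2 -> (v2 < hi2 \/ vr < hi2) ->
      optimal mu b r v2 (cutoff_strategy vb vr v2).
Proof.
  set (Q := Rf lo1 hi1 mu).
  assert (Qmono : forall v w, v <= w -> Q v <= Q w) by (intros; apply R_mono; auto).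
  assert (Qlip : forall v w, v <= w -> Q w - Q v <= w - v) by (intros; apply R_lip; auto).
  assert (Qnn : forall v, 0 <= Q v) by (intros; apply R_nonneg).
  assert (Qlo : Q lo1 <= 0) by apply R_lo1.
  set (m := Rmin (b + r) hi2).
  assert (Hm1 : m <= b + r) by apply Rmin_l.
  assert (Hm2 : m <= hi2) by apply Rmin_r.
  assert (Hm3 : m = b + r \/ m = hi2) by (unfold m, Rmin; destruct Rle_dec; auto).
  destruct (Rle_dec (Q (b + r)) b) as [HA|HB].
  - exists m, m. split; [lra|split;[lra|split;[lra|]]].
    intros v [Hv1 Hv2] Hc. unfold cutoff_strategy.
    destruct (Rle_dec v m).
    + intros a'; destruct a'; simpl; try change (Ex lo1 hi1 mu (fun v1 => Rmax (v - v1) 0)) with (Q v) in *; try lra.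
      pose proof (Qmono v (b+r)); lra.
    + destruct (Rlt_dec v m); [lra|].
      assert (v > b + r) by (destruct Hm3; lra).
      intros a'; destruct a'; simpl; try change (Ex lo1 hi1 mu (fun v1 => Rmax (v - v1) 0)) with (Q v) in *; try lra.
      pose proof (Qlip (b+r) v); lra.
  - apply Rnot_le_lt in HB.
    destruct (completeness (fun v => Q v <= b)) as [s [Hs1 Hs2]].
    { exists (b + r). intros x Hx. destruct (Rle_dec x (b+r)); auto.
      pose proof (Qmono (b+r) x); lra. }
    { exists lo1. lra. }
    assert (Hsb : s <= b + r).
    { apply Hs2. intros x Hx. destruct (Rle_dec x (b+r)); auto.
      pose proof (Qmono (b+r) x); lra. }
    assert (HQs : Q s <= b).
    { destruct (Rle_dec (Q s) b); auto. exfalso.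
      set (e := Q s - b).
      assert (s <= s - e); [|unfold e in *; lra].
      apply Hs2. intros x Hx. pose proof (Hs1 x Hx).
      destruct (Rle_dec x (s - e)); auto. pose proof (Qlip x s). unfold e in *; lra. }
    destruct (completeness (fun v => v <= hi2 /\ v - Q v < r)) as [u [Hu1 Hu2]].
    { exists hi2. intros x [Hx _]. auto. }
    { exists (Rmin hi2 r - 1). pose proof (Rmin_l hi2 r). pose proof (Rmin_r hi2 r).
      pose proof (Qnn (Rmin hi2 r - 1)). split; lra. }
    assert (Huh : u <= hi2) by (apply Hu2; intros x [Hx _]; auto).
    assert (Hmu : m <= u).
    { apply Hu1. split; auto. pose proof (Qlip m (b+r) Hm1). lra. }
    assert (Hlow : forall v, v < u -> v - Q v < r).
    { intros v Hv. destruct (Rlt_dec (v - Q v) r); auto. exfalso.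
      assert (u <= v); [|lra]. apply Hu2. intros x [Hx1 Hx2].
      destruct (Rle_dec x v); auto. pose proof (Qlip v x ltac:(lra)). lra. }
    assert (Hhigh : forall v, u <= v -> v <= hi2 -> (v < hi2 \/ u < hi2) -> r <= v - Q v).
    { intros v Hv1 Hv2 Hc. destruct (Rle_dec r (v - Q v)); auto. exfalso.
      destruct (Rle_dec v u).
      - assert (v = u) by lra. subst v.
        set (e := Rmin (hi2 - u) (r - (u - Q u))).
        assert (e <= hi2 - u) by apply Rmin_l.
        assert (e <= r - (u - Q u)) by apply Rmin_r.
        assert (0 < e) by (unfold e, Rmin; destruct Rle_dec; lra).
        assert (u + e/2 <= u); [|lra].
        apply Hu1. pose proof (Qmono u (u + e/2) ltac:(lra)). split; lra.
      - assert (v <= u); [|lra]. apply Hu1. split; lra. }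
    exists (Rmin s hi2), u.
    pose proof (Rmin_l s hi2). pose proof (Rmin_r s hi2).
    split. { unfold m. apply Rmin_glb; lra. }
    split; [lra|split;[lra|]].
    intros v [Hv1 Hv2] Hc. unfold cutoff_strategy.
    destruct (Rle_dec v (Rmin s hi2)).
    + intros a'; destruct a'; simpl; try change (Ex lo1 hi1 mu (fun v1 => Rmax (v - v1) 0)) with (Q v) in *; try lra.
      pose proof (Qmono v s); lra.
    + assert (Hvs : s < v).
      { destruct (Rle_dec v s); [|lra]. exfalso. apply n.
        unfold Rmin; destruct Rle_dec; lra. }
      assert (Q v > b).
      { destruct (Rle_dec (Q v) b); [|lra]. pose proof (Hs1 v r0); lra. }
      destruct (Rlt_dec v u).
      * pose proof (Hlow v r0).
        intros a'; destruct a'; simpl; try change (Ex lo1 hi1 mu (fun v1 => Rmax (v - v1) 0)) with (Q v) in *; lra.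
      * pose proof (Hhigh v ltac:(lra) Hv2 Hc).
        assert (v >= b + r).
        { destruct Hm3; [lra|]. destruct Hc; lra. }
        intros a'; destruct a'; simpl; try change (Ex lo1 hi1 mu (fun v1 => Rmax (v - v1) 0)) with (Q v) in *; lra.
Qed.
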